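(* Let $M\ge 2$ be an integer. (Downlink) If $0<P<P_{\mathrm{cross,DL}}:=\frac{4}{M-1}$, then for every integer $K$ with $2\le K\le M$, $$K\log_2\!\left(1+\frac{P(M+1)}{P(K-1)+K}\right)> K\log_2\!\left(1+\frac{P(M-K+1)}{K}\right).$$ (Uplink) If $0<P_u<P_{\mathrm{cross,UL}}:=\frac{1}{M-1}$, then for every integer $K$ with $2\le K\le M$, $$K\log_2\!\left(1+\frac{P_uM}{P_u(K-1)+1}\right)> K\log_2\!\left(1+P_u(M-K+1)\right).$$
   Context: The left-hand sides are the paper's closed-form low-SNR ergodic sum-rate expressions for maximum ratio transmission with matrix normalization (downlink, total power $P$) and maximum ratio combining (uplink, per-user power $P_u$), and the right-hand sides are those for zero-forcing with vector normalization (downlink) and zero-forcing reception (uplink), for $M$ base-station antennas and $K$ single-antenna users. The lemma states that below the power cross point, MRT/MRC is better than ZF regardless of the number of active users. *)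

(* Defs.v *)
From Stdlib Require Import Reals.
Open Scope R_scope.

Definition log2 (x : R) : R := ln x / ln 2.

Definition P_cross_DL (M : nat) : R := 4 / (INR M - 1).
Definition P_cross_UL (M : nat) : R := 1 / (INR M - 1).

Definition rate_MRT (M K : nat) (P : R) : R :=
  INR K * log2 (1 + P * (INR M + 1) / (P * (INR K - 1) + INR K)).
Definition rate_ZF_DL (M K : nat) (P : R) : R :=
  INR K * log2 (1 + P * (INR M - INR K + 1) / INR K).
Definition rate_MRC (M K : nat) (Pu : R) : R :=
  INR K * log2 (1 + Pu * INR M / (Pu * (INR K - 1) + 1)).
Definition rate_ZF_UL (M K : nat) (Pu : R) : R :=
  INR K * log2 (1 + Pu * (INR M - INR K + 1)).

(* Main.v *)
Require Import Defs.
From Stdlib Require Import Reals Lra Psatz.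
Open Scope R_scope.

Lemma rate_cmp (k x y : R) : 0 < k -> 0 < x -> x < y -> k * log2 y > k * log2 x.
Proof.
  intros Hk Hx Hxy. unfold log2.
  assert (H2 : 0 < ln 2) by (rewrite <- ln_1; apply ln_increasing; lra).
  assert (ln x < ln y) by (apply ln_increasing; lra).
  apply Rmult_lt_compat_l; [lra|].
  unfold Rdiv; apply Rmult_lt_compat_r; [apply Rinv_0_lt_compat; lra | lra].
Qed.

Lemma frac_lt (a b c d : R) : 0 < b -> 0 < d -> c * b < a * d -> c / d < a / b.
Proof.
  intros Hb Hd H.
  apply (Rplus_lt_reg_r (- (c/d))).
  replace (c / d + - (c / d)) with 0 by ring.
  replace (a / b + - (c / d)) with ((a * d - c * b) / (b * d)) by (field; lra).
  apply Rdiv_lt_0_compat; nra.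
Qed.

Theorem lemma8 (M : nat) (HM : (2 <= M)%nat) :
  (forall P : R, 0 < P -> P < P_cross_DL M ->
     forall K : nat, (2 <= K)%nat -> (K <= M)%nat ->
       rate_MRT M K P > rate_ZF_DL M K P) /\
  (forall Pu : R, 0 < Pu -> Pu < P_cross_UL M ->
     forall K : nat, (2 <= K)%nat -> (K <= M)%nat ->
       rate_MRC M K Pu > rate_ZF_UL M K Pu).
Proof.
  assert (Hm : 2 <= INR M) by (apply (le_INR 2); exact HM).
  split.
  - intros P HP HPc K HK HKM.
    assert (Hk : 2 <= INR K) by (apply (le_INR 2); exact HK).
    assert (Hkm : INR K <= INR M) by (apply le_INR; exact HKM).
    unfold P_cross_DL in HPc.
    assert (HP4 : P * (INR M - 1) < 4).
    { apply (Rmult_lt_compat_r (INR M - 1)) in HPc; [|lra].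
      unfold Rdiv in HPc; rewrite Rmult_assoc, Rinv_l in HPc; lra. }
    unfold rate_MRT, rate_ZF_DL.
    apply rate_cmp; [lra| |].
    + assert (0 <= P * (INR M - INR K + 1) / INR K).
      { apply Rle_mult_inv_pos; nra. }
      lra.
    + apply Rplus_lt_compat_l. apply frac_lt; [nra|lra|].
      assert (H1 : (INR K - 1) * (INR M - INR K + 1) <= (INR K - 1) * (INR M - 1)) by nra.
      assert (H2 : 4 * (INR K - 1) <= INR K * INR K) by nra.
      assert (H3 : P * ((INR K - 1) * (INR M - INR K + 1)) < INR K * INR K).
      { assert (P * ((INR K - 1) * (INR M - 1)) < 4 * (INR K - 1)) by nra. nra. }
      nra.
  - intros P HP HPc K HK HKM.
    assert (Hk : 2 <= INR K) by (apply (le_INR 2); exact HK).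
    assert (Hkm : INR K <= INR M) by (apply le_INR; exact HKM).
    unfold P_cross_UL in HPc.
    assert (HP4 : P * (INR M - 1) < 1).
    { apply (Rmult_lt_compat_r (INR M - 1)) in HPc; [|lra].
      unfold Rdiv in HPc; rewrite Rmult_assoc, Rinv_l in HPc; lra. }
    unfold rate_MRC, rate_ZF_UL.
    apply rate_cmp; [lra|nra|].
    apply Rplus_lt_compat_l.
    replace (P * (INR M - INR K + 1)) with (P * (INR M - INR K + 1) / 1) by field.
    apply frac_lt; [nra|lra|].
    assert (H1 : P * (INR M - INR K + 1) < 1) by nra.
    assert (H2 : 0 < P * ((INR K - 1) * (1 - P * (INR M - INR K + 1)))).
    { apply Rmult_lt_0_compat; [lra|]. apply Rmult_lt_0_compat; lra. }
    nra.
Qed.
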